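(* Let $\delta>0$ and let $\mathcal{G}$ be a class of graphs, each of average degree at least $2+\delta$, such that the girth of graphs in $\mathcal{G}$ is unbounded. Then $\mathcal{G}$ is not fractionally-$\mathrm{tw}$-fragile.
   Context: A distribution $\pi$ over subsets of $V$ is $\varepsilon$-thin if $\Pr_{X\sim\pi}[v\in X]\le\varepsilon$ for every $v\in V$. A class $\mathcal{G}$ of graphs is fractionally-$\mathrm{tw}$-fragile if for every $\varepsilon>0$ there is $k$ such that every $G\in\mathcal{G}$ has an $\varepsilon$-thin distribution over sets $X\subseteq V(G)$ with $\mathrm{tw}(G-X)\le k$, where $\mathrm{tw}$ is treewidth. *)

(* Defs.v *)
From HB Require Import structures.
From mathcomp Require Import all_boot all_order all_algebra.
From mathcomp Require Import reals.
Set Implicit Arguments. Unset Strict Implicit. Unset Printing Implicit Defensive.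
Import Order.TTheory GRing.Theory Num.Theory.
Local Open Scope ring_scope.

Record sgraph := SGraph {
  vert :> finType;
  adj : rel vert;
  adj_sym : symmetric adj;
  adj_irr : irreflexive adj }.

Section Induced.
Variables (G : sgraph) (S : {set G}).
Definition ind_vert : finType := {x : G | x \in S}.
Definition ind_adj : rel ind_vert := fun x y => adj (val x) (val y).
Lemma ind_adj_sym : symmetric ind_adj.
Proof. by move=> x y; rewrite /ind_adj adj_sym. Qed.
Lemma ind_adj_irr : irreflexive ind_adj.
Proof. by move=> x; rewrite /ind_adj adj_irr. Qed.
Definition induced : sgraph := SGraph ind_adj_sym ind_adj_irr.
End Induced.

Definition del_vert (G : sgraph) (X : {set G}) : sgraph := induced (~: X).

Definition is_tree (I : finType) (te : rel I) : Prop :=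
  symmetric te /\ irreflexive te /\
  (forall i j : I, connect te i j) /\
  (forall c : seq I, ucycle te c -> (size c < 3)%N).

Definition tree_decomp_width_le (G : sgraph) (I : finType) (te : rel I)
  (B : I -> {set G}) (k : nat) : Prop :=
  is_tree te /\
  (forall v : G, exists i, v \in B i) /\
  (forall u v : G, adj u v -> exists i, (u \in B i) && (v \in B i)) /\
  (forall (v : G) (i j : I), v \in B i -> v \in B j ->
      connect [rel a b | [&& te a b, v \in B a & v \in B b]] i j) /\
  (forall i, (#|B i| <= k.+1)%N).

Definition tw_le (G : sgraph) (k : nat) : Prop :=
  exists (I : finType) (te : rel I) (B : I -> {set G}),
    tree_decomp_width_le te B k.

Definition thin_tw_distribution (R : realType) (G : sgraph) (eps : R) (k : nat)
  : Prop :=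
  exists p : {set G} -> R,
    (forall X, 0 <= p X) /\
    (\sum_(X : {set G}) p X = 1) /\
    (forall v : G, \sum_(X : {set G} | v \in X) p X <= eps) /\
    (forall X, 0 < p X -> tw_le (del_vert X) k).

Definition frac_tw_fragile (R : realType) (C : sgraph -> Prop) : Prop :=
  forall eps : R, 0 < eps -> exists k : nat,
    forall G, C G -> thin_tw_distribution G eps k.

Definition deg (G : sgraph) (v : G) : nat := #|[set w | adj v w]|.

(* average degree 2|E|/|V| = (sum of degrees)/|V| *)
Definition avg_degree (R : realType) (G : sgraph) : R :=
  (\sum_(v : G) deg v)%:R / (#|G|)%:R.

(* girth(G) >= n : every cycle has length at least n (forests have girth oo) *)
Definition girth_ge (G : sgraph) (n : nat) : Prop :=
  forall c : seq G, ucycle (@adj G) c -> (3 <= size c)%N -> (n <= size c)%N.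

(* Main.v *)
Require Import Defs.
From HB Require Import structures.
From mathcomp Require Import all_boot all_order all_algebra.
From mathcomp Require Import reals.
From mathcomp Require Import zify ring lra.
Set Implicit Arguments. Unset Strict Implicit. Unset Printing Implicit Defensive.

Section Gen.
Variables (T : finType).

Definition avoid (r : rel T) (s : T) : rel T := [rel a b | r a b && (a != s) && (b != s)].

Lemma avoid_sym r s : symmetric r -> symmetric (avoid r s).
Proof. by move=> rs a b; rewrite /avoid /= rs andbAC. Qed.

Lemma path_all_connect (r : rel T) x p : path r x p -> all (connect r x) p.
Proof.
elim: p x => [//|y p IH] x /= /andP [rxy /IH H].
rewrite connect1 //=; apply: sub_all H => z; apply: connect_trans; exact: connect1.
Qed.

Lemma path_restrict (r : rel T) (P : pred T) x p :
  path r x p -> P x -> all P p -> path [rel a b | r a b && P a && P b] x p.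
Proof.
elim: p x => [//|y p IH] x /= /andP [rxy pth] Px /andP [Py Pp].
by rewrite rxy Px Py /=; apply: IH.
Qed.

Lemma path_avoid_all r s x p : path (avoid r s) x p -> all (predC1 s) p.
Proof.
elim: p x => [//|y p IH] x /= /andP [/andP [_ ys] pth].
by rewrite ys /=; apply: IH pth.
Qed.

Lemma decomp_path (r : rel T) t x q : path r x q -> last x q = t -> x != t ->
  exists2 u, r u t & connect (avoid r t) x u.
Proof.
elim: q x => [|y q IH] x /=; first by move=> _ -> /eqP.
move=> /andP [rxy pth] lst xt.
case: (eqVneq y t) => [yt|yt].
  by exists x; [rewrite -yt | exact: connect0].
have [u rut cyu] := IH y pth lst yt.
exists u => //; apply: connect_trans cyu; apply: connect1; by rewrite /avoid /= rxy xt yt.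
Qed.

Lemma decomp (r : rel T) t x : symmetric r -> connect r t x -> x != t ->
  exists2 u, r t u & connect (avoid r t) u x.
Proof.
move=> rs ctx xt.
have cxt : connect r x t by rewrite (sym_connect_sym rs).
case/connectP: cxt => q pth lst.
have [u rut cxu] := decomp_path pth (esym lst) xt.
exists u; first by rewrite rs.
by rewrite (sym_connect_sym (avoid_sym t rs)).
Qed.

Variable e : rel T.
Hypothesis esym : symmetric e.
Hypothesis eirr : irreflexive e.
Hypothesis eacyc : forall c : seq T, ucycle e c -> size c < 3.

Definition comp s t := [set x | connect (avoid e s) t x].

Lemma edge_neq x y : e x y -> x != y.
Proof. by apply: contraTneq => ->; rewrite eirr. Qed.

Lemma notin_comp s t : s != t -> s \notin comp s t.
Proof.
move=> st; rewrite inE; apply/negP => /connectP [p pth sl].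
move: pth sl; case/lastP: p => [|p z]; first by move=> _ /= sl; rewrite sl eqxx in st.
rewrite rcons_path last_rcons => /andP [_ /andP [_ zs]] sl.
by rewrite sl eqxx in zs.
Qed.

Lemma comp_self s t : t \in comp s t.
Proof. by rewrite inE connect0. Qed.

Lemma comp_boundary s t x y : s != t -> x \in comp s t -> y \notin comp s t -> e x y -> y = s.
Proof.
move=> st xin ynin exy; case: (eqVneq y s) => // ys.
have xs : x != s by apply: contraTneq xin => ->; apply: notin_comp.
move: xin; rewrite inE => cx.
have : y \in comp s t by rewrite inE (connect_trans cx) // connect1 // /avoid /= exy xs ys.
by rewrite (negbTE ynin).
Qed.

Lemma no_two_routes t u s : e t u -> e t s -> u != s -> ~~ connect (avoid e t) u s.
Proof.
move=> etu ets us; apply/negP => /connectP [p pth sl].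
case: (shortenP pth) sl => p' pth' uq _ sl.
have pth'' : path e u p' by apply: sub_path pth' => a b /andP [/andP []].
have := eacyc (c := t :: u :: p').
have nt : all (predC1 t) p' := path_avoid_all pth'.
have tu : t != u := edge_neq etu.
case: p' pth' uq sl pth'' nt => [|z p'] pth' uq sl pth'' nt.
  by move: sl => /= sl; rewrite sl eqxx in us.
move=> H.
have uc : ucycle e [:: t, u, z & p'].
  rewrite /ucycle; apply/andP; split.
    rewrite /cycle /= etu /=; move: pth''; rewrite /= => /andP [-> pz] /=; rewrite rcons_path pz /=.
    by move: sl => /= <-; rewrite esym.
  rewrite cons_uniq uq andbT inE negb_or tu /=.
  by apply/negP => /(allP nt) /=; rewrite eqxx.
by have := H uc.
Qed.

Lemma comp_sub s t u : e s t -> e t u -> u != s -> comp t u \subset comp s t.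
Proof.
move=> est etu us; apply/subsetP => x; rewrite !inE => /connectP [p pth ->].
have ts : t != s by rewrite eq_sym; apply: edge_neq.
have allp : all (predC1 s) p.
  apply: sub_all (path_all_connect pth) => y /= cy.
  apply: contraTneq cy => ->; apply: no_two_routes etu _ us.
  by rewrite esym.
have pth2 := path_restrict (P := predC1 s) pth us allp.
apply: connect_trans (_ : connect (avoid e s) u _).
  by apply: connect1; rewrite /avoid /= etu ts us.
apply/connectP; exists p => //; apply: sub_path pth2 => a b /= /andP [/andP [/andP [/andP [eab _] _] h1] h2].
by rewrite /avoid /= eab h1 h2.
Qed.

Lemma comp_lt s t u : e s t -> e t u -> u != s -> #|comp t u| < #|comp s t|.
Proof.
move=> est etu us.
rewrite (cardsD1 t (comp s t)) comp_self add1n ltnS.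
apply: subset_leq_card; apply/subsetP => x xin.
rewrite in_setD1 (subsetP (comp_sub est etu us)) // andbT.
by apply: contraTneq xin => ->; apply: notin_comp; apply: edge_neq.
Qed.

Lemma descent (P : T -> T -> bool) s t : e s t -> P s t ->
  exists s', exists t', [/\ e s' t', P s' t' & forall u, e t' u -> u != s' -> ~~ P t' u].
Proof.
move: {2}#|comp s t| (leqnn #|comp s t|) => n.
elim: n s t => [|n IH] s t le est Pst.
  by move: le; rewrite leqn0 => /eqP /cards0_eq H; move: (comp_self s t); rewrite H inE.
case: (boolP [exists u, [&& e t u, u != s & P t u]]) => [/existsP [u /and3P [etu us Ptu]]|none].
  apply: (IH t u) => //; rewrite -ltnS; apply: leq_trans le; exact: comp_lt.
exists s, t; split => // u etu us; apply/negP => Ptu.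
by move/existsP: none; apply; exists u; rewrite etu us Ptu.
Qed.

End Gen.

Section Forest.
Variables (T : finType) (adjr : rel T).
Hypothesis asym : symmetric adjr.
Hypothesis airr : irreflexive adjr.

Definition E (A : {set T}) : nat :=
  \sum_(x : T) \sum_(y : T) ((x \in A) && (y \in A) && adjr x y : nat).

Lemma sum_pair1 (a b : T) : \sum_(x : T) \sum_(y : T) ((x == a) && (y == b) : nat) = 1.
Proof.
rewrite (bigD1 a) //= [X in _ + X]big1 => [|x xa]; last first.
  by rewrite big1 // => y _; rewrite (negbTE xa).
rewrite addn0 (bigD1 b) //= !eqxx big1 // => y yb.
by rewrite (negbTE yb) andbF.
Qed.

Lemma E_mono (A B : {set T}) : A \subset B -> E A <= E B.
Proof.
move=> AB; apply: leq_sum => x _; apply: leq_sum => y _.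
case: (boolP (x \in A)) => xA //=; case: (boolP (y \in A)) => yA //=.
by rewrite (subsetP AB x xA) (subsetP AB y yA).
Qed.

Lemma forest_bound (W : {set T}) :
  (forall c, ucycle adjr c -> {subset c <= W} -> size c < 3) -> E W <= 2 * #|W|.
Proof.
move: {2}#|W| (leqnn #|W|) => n.
elim: n W => [|n IH] W le acyc.
  move: le; rewrite leqn0 => /eqP /cards0_eq ->.
  by rewrite /E big1 // => x _; rewrite big1 // => y _; rewrite inE.
pose eW := [rel a b | adjr a b && (a \in W) && (b \in W)].
have eWsym : symmetric eW by move=> a b; rewrite /eW /= asym andbAC.
have eWirr : irreflexive eW by move=> a; rewrite /eW /= airr.
have eWac : forall c, ucycle eW c -> size c < 3.
  move=> c /andP [cyc uq]; apply: acyc.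
    by rewrite /ucycle uq andbT; apply: sub_cycle cyc => a b /andP [/andP []].
  by move=> x xc; have := next_cycle cyc xc; rewrite /eW /= => /andP [/andP [_ ->]].
case: (boolP [exists x, exists y, eW x y]) => [/existsP [s /existsP [t est]]|none]; last first.
  rewrite /E big1 // => x _; rewrite big1 // => y _.
  case: (boolP (eW x y)) => [exy|]; last by rewrite /eW /=; case: (adjr x y); case: (x \in W); case: (y \in W).
  by move/existsP: none; case; exists x; apply/existsP; exists y.
have [s' [t' [est' _ leaf]]] := descent eWsym eWirr eWac (P := fun _ _ => true) est isT.
have t'W : t' \in W by move: est' => /andP [/andP [_ _] ->].
have s'W : s' \in W by move: est' => /andP [/andP [_ ->] _].
have key : E W <= E (W :\ t') + 2.
  rewrite -[2]/(1 + 1) -{1}(sum_pair1 t' s') -(sum_pair1 s' t') /E -!big_split /=.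
  apply: leq_sum => x _; rewrite -!big_split /=; apply: leq_sum => y _.
  case: (boolP ((x \in W) && (y \in W) && adjr x y)) => // /andP [/andP [xW yW] axy].
  case: (eqVneq x t') => [xt|xt].
    have : y == s'.
      apply: contraT => ys; have := leaf y; rewrite /eW /= -xt axy xW yW => H.
      by have := H isT ys.
    by move/eqP => ->; rewrite xt !eqxx /= addnC.
  case: (eqVneq y t') => [yt|yt].
    have : x == s'.
      apply: contraT => xs; have := leaf x; rewrite /eW /= -yt asym axy xW yW => H.
      by have := H isT xs.
    by move/eqP => ->; rewrite yt !eqxx /= add0n addn1.
  by rewrite !in_setD1 xt yt xW yW axy.
have card : #|W :\ t'| = #|W|.-1 by rewrite (cardsD1 t' W) t'W.
apply: leq_trans key _.
have IH' := IH (W :\ t').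
have : E (W :\ t') <= 2 * #|W :\ t'|.
  apply: IH'; first by rewrite card -ltnS (ltn_predK (_ : 0 < #|W|)) //; apply/card_gt0P; exists t'.
  by move=> c uc sub; apply: acyc uc _ => x /sub; rewrite in_setD1 => /andP [].
rewrite card => H; apply: leq_trans (leq_add H (leqnn 2)) _.
have : 0 < #|W| by apply/card_gt0P; exists t'.
by case: #|W| => // m _ /=; rewrite mulnS addnC.
Qed.

End Forest.

Lemma first_exit (T : finType) (r : rel T) (P : pred T) a b :
  connect r a b -> P a -> ~~ P b -> exists x, exists y, [/\ r x y, P x & ~~ P y].
Proof.
case/connectP => p pth ->; elim: p a pth => [|y p IH] a /=; first by move=> _ ->.
move=> /andP [ray pth] Pa Pl.
case: (boolP (P y)) => Py; first exact: IH pth Py Pl.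
by exists a, y.
Qed.

Lemma grouping (I T : finType) (f : I -> {set T}) (L : seq I) M M1 : 0 < M ->
  (forall u, u \in L -> #|f u| < M1) -> M <= #|\bigcup_(u <- L) f u| ->
  exists2 L', {subset L' <= L} & M <= #|\bigcup_(u <- L') f u| < M + M1.
Proof.
move=> M0; elim: L => [|u L IH] small big.
  by move: big; rewrite big_nil cards0 leqn0 => /eqP M00; rewrite M00 in M0.
case: (leqP M #|\bigcup_(u <- L) f u|) => h.
  have [L' sub H] := IH (fun v vL => small v (mem_behead (s := u :: L) vL)) h.
  by exists L' => // x /sub xL; rewrite inE xL orbT.
exists (u :: L) => //; apply/andP; split => //.
rewrite big_cons; apply: leq_ltn_trans (leq_card_setU _ _).1 _.
have su := small u (mem_head _ _); rewrite -addSn addnC; apply: leq_add => //; exact: ltnW.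
Qed.

Section Main.
Variables (H : sgraph) (I : finType) (te : rel I) (B : I -> {set H}) (k : nat).
Hypothesis td : tree_decomp_width_le te B k.
Variables (g M' : nat).
Hypothesis M'pos : 0 < M'.
Hypothesis hg : (M' + k + 1) + (M' + k + 1 + k + 1) < g.
Hypothesis girth : girth_ge H g.

Let M := M' + k + 1.
Let M1 := M + k + 1.
Let EH := E (@adj H).

Definition U (D : {set I}) : {set H} := \bigcup_(x in D) B x.

Let tsym : symmetric te. Proof. by case: td => [[? _]]. Qed.
Let tirr : irreflexive te. Proof. by case: td => [[_ [? _]]]. Qed.
Let tconn : forall i j, connect te i j. Proof. by case: td => [[_ [_ [? _]]]]. Qed.
Let tacyc : forall c, ucycle te c -> size c < 3. Proof. by case: td => [[_ [_ [_ ?]]]]. Qed.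
Let tcov : forall v : H, exists i, v \in B i. Proof. by case: td => [_ [? _]]. Qed.
Let tedge : forall u v : H, adj u v -> exists i, (u \in B i) && (v \in B i).
Proof. by case: td => [_ [_ [? _]]]. Qed.
Let tconnv : forall (v : H) i j, v \in B i -> v \in B j ->
      connect [rel a b | [&& te a b, v \in B a & v \in B b]] i j.
Proof. by case: td => [_ [_ [_ [? _]]]]. Qed.
Let tbag : forall i, #|B i| <= k.+1. Proof. by case: td => [_ [_ [_ [_ ?]]]]. Qed.

Lemma small_acyc (W : {set H}) : #|W| < g ->
  forall c, ucycle (@adj H) c -> {subset c <= W} -> size c < 3.
Proof.
move=> Wg c uc sub; rewrite ltnNge; apply/negP => c3.
have := girth uc c3; move/andP: uc => [_ uq].
have : size c <= #|W|.
  rewrite -(card_uniqP uq); apply: subset_leq_card; apply/subsetP => x; exact: sub.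
move=> h1 h2; have := leq_trans h2 h1; by rewrite leqNgt Wg.
Qed.

Lemma private t u q x y : te t u -> x \in comp te t u -> q \in B x -> q \notin B t ->
  q \in B y -> y \in comp te t u.
Proof.
move=> etu xin qx qt qy; apply: contraT => ynin.
have [a [b [rab ain bnin]]] := first_exit (tconnv qx qy) xin ynin.
move/and3P: rab => [eab qa qb].
have tu : t != u by apply: edge_neq tirr _ _ etu.
have := comp_boundary tu ain bnin eab; move=> bt; by rewrite -bt qb in qt.
Qed.

Lemma step (A : {set H}) t (L : seq I) : (forall u, u \in L -> te t u) ->
  (forall u, u \in L -> #|A :&: U (comp te t u)| < M1) ->
  M <= #|\bigcup_(u <- L) (A :&: U (comp te t u))| ->
  exists Q : {set H}, [/\ Q \subset A, M' <= #|Q| & EH A <= EH (A :\: Q) + 2 * (#|Q| + k + 1)].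
Proof.
move=> nb small big.
have M0 : 0 < M by rewrite /M addn1.
have [L' sub /andP [WM WM1]] := grouping (f := fun u => A :&: U (comp te t u)) M0 small big.
set W := \bigcup_(u <- L') _ in WM WM1.
have memW : forall y, reflect (exists2 u, u \in L' & y \in A :&: U (comp te t u)) (y \in W).
  by move=> y; rewrite /W bigcup_seq; apply: (iffP bigcupP) => [[u]|[u]]; exists u.
have WA : W \subset A by apply/subsetP => y /memW [u _]; rewrite inE => /andP [].
exists (W :\: B t); split.
- by apply: subset_trans WA; apply: subsetDl.
- have := cardsID (B t) W; have := subset_leq_card (subsetIr W (B t)).
  have := tbag t; rewrite /M in WM; lia.
have Wg : #|W| < g by apply: ltn_trans hg; rewrite /M1 /M in WM1.
have EW := forest_bound (@adj_sym H) (@adj_irr H) (small_acyc Wg).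
have cardW : #|W| <= #|W :\: B t| + k + 1.
  have := cardsID (B t) W; have := subset_leq_card (subsetIr W (B t)).
  have := tbag t; lia.
have closure : forall q y, q \in W :\: B t -> y \in A -> adj q y -> y \in W.
  move=> q y; rewrite in_setD => /andP [qt /memW [u uL]].
  rewrite inE => /andP [_ /bigcupP [x xin qx]] yA aqy.
  have [z /andP [qz yz]] := tedge aqy.
  have zin := private (nb u (sub u uL)) xin qx qt qz.
  by apply/memW; exists u => //; rewrite inE yA; apply/bigcupP; exists z.
have key : EH A <= EH (A :\: (W :\: B t)) + EH W.
  rewrite /EH /E -big_split /=; apply: leq_sum => x _; rewrite -big_split /=; apply: leq_sum => y _.
  case: (boolP ((x \in A) && (y \in A) && adj x y)) => // /andP [/andP [xA yA] axy].
  case: (boolP (x \in W :\: B t)) => xQ.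
    have yW := closure _ _ xQ yA axy.
    have xW : x \in W by move: xQ; rewrite in_setD => /andP [].
    by rewrite xW yW axy addn1.
  case: (boolP (y \in W :\: B t)) => yQ.
    have xW : x \in W by apply: (closure y) => //; rewrite adj_sym.
    have yW : y \in W by move: yQ; rewrite in_setD => /andP [].
    by rewrite xW yW axy addn1.
  by move: xQ yQ; rewrite !in_setD => xQ yQ; rewrite xQ yQ xA yA axy.
apply: leq_trans key _; rewrite leq_add2l; apply: leq_trans EW _.
by rewrite leq_mul2l cardW orbT.
Qed.

Lemma cover (A S : {set H}) t (L : seq I) :
  S \subset B t :|: \bigcup_(u <- L) (A :&: U (comp te t u)) -> M1 <= #|S| ->
  M <= #|\bigcup_(u <- L) (A :&: U (comp te t u))|.
Proof.
move=> sub big; have := subset_leq_card sub.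
have := (leq_card_setU (B t) (\bigcup_(u <- L) (A :&: U (comp te t u)))).1.
have := tbag t; move: big; rewrite /M1 /M.
set X := #|\bigcup_(u <- L) _|; set Y := #|B t :|: _|; lia.
Qed.

Lemma L_bound (A : {set H}) : EH A * M' <= 2 * #|A| * (M' + k + 1).
Proof.
move: {2}#|A| (leqnn #|A|) => n; elim: n A => [|n IH] A le.
  have -> : A = set0 by apply/cards0_eq; move: le; rewrite leqn0 => /eqP.
  rewrite cards0 muln0 mul0n leqn0 muln_eq0; apply/orP; left.
  by rewrite /EH /E big1 // => x _; rewrite big1 // => y _; rewrite inE.
case: (ltnP #|A| M1) => [Asmall|Abig].
  have Ag : #|A| < g by apply: ltn_trans Asmall _; apply: leq_ltn_trans _ hg; rewrite leq_addl.
  have EA := forest_bound (@adj_sym H) (@adj_irr H) (small_acyc Ag).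
  apply: leq_trans (leq_mul EA (leqnn M')) _.
  by rewrite leq_mul2l -addnA leq_addr orbT.
have [Q [QA QM' EQ]] : exists Q : {set H},
    [/\ Q \subset A, M' <= #|Q| & EH A <= EH (A :\: Q) + 2 * (#|Q| + k + 1)].
  case: (boolP [exists s, exists t, te s t && (M1 <= #|A :&: U (comp te s t)|)]).
    case/existsP => s /existsP [t /andP [est bigst]].
    have [s' [t' [est' big' leaf]]] :=
      descent tsym tirr tacyc (P := fun s t => M1 <= #|A :&: U (comp te s t)|) est bigst.
    apply: (step (t := t') (L := [seq u <- enum I | te t' u && (u != s')])).
    - by move=> u; rewrite mem_filter => /andP [/andP [? _] _].
    - by move=> u; rewrite mem_filter => /andP [/andP [etu us] _]; rewrite ltnNge; apply: leaf etu us.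
    apply: (cover _ big'); apply/subsetP => v; rewrite inE => /andP [vA /bigcupP [x xin vx]].
    case: (eqVneq x t') => [xt|xt]; first by rewrite inE -xt vx.
    move: xin; rewrite inE => cx.
    have [u au cux] := decomp (avoid_sym s' tsym) cx xt.
    move: au; rewrite /avoid /= => /andP [/andP [etu _] us].
    rewrite inE; apply/orP; right; rewrite bigcup_seq; apply/bigcupP; exists u.
      by rewrite mem_filter etu us mem_enum.
    rewrite inE vA; apply/bigcupP; exists x => //; rewrite inE.
    apply: (connect_sub _ cux) => a b /andP [/andP [/andP [/andP [eab h1] h2] h3] h4].
    by apply: connect1; rewrite /avoid /= eab h3 h4.
  move=> none.
  have : 0 < #|A| by apply: leq_trans Abig; rewrite /M1 addn1.
  case/card_gt0P => v vA; have [t vt] := tcov v.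
  apply: (step (t := t) (L := [seq u <- enum I | te t u])).
  - by move=> u; rewrite mem_filter => /andP [].
  - move=> u; rewrite mem_filter => /andP [etu _]; rewrite ltnNge; apply/negP => bg.
    by move/existsP: none; apply; exists t; apply/existsP; exists u; rewrite etu bg.
  apply: (cover (S := A) _ Abig); apply/subsetP => w wA.
  have [x wx] := tcov w.
  case: (eqVneq x t) => [xt|xt]; first by rewrite inE -xt wx.
  have [u etu cux] := decomp tsym (tconn t x) xt.
  rewrite inE; apply/orP; right; rewrite bigcup_seq; apply/bigcupP; exists u.
    by rewrite mem_filter etu mem_enum.
  by rewrite inE wA; apply/bigcupP; exists x => //; rewrite inE.
have QA' : A :&: Q = Q by apply/setIidPr.
have cardAQ : #|A :\: Q| = #|A| - #|Q| by rewrite cardsD QA'.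
have QleA : #|Q| <= #|A| by apply: subset_leq_card.
have lt' : #|A :\: Q| <= n by rewrite cardAQ; move: le M'pos QM'; lia.
have IH' := IH (A :\: Q) lt'.
rewrite cardAQ in IH'.
have h1 := leq_mul EQ (leqnn M').
move: h1 IH' QleA QM'.
set e := EH A; set e' := EH (A :\: Q); set q := #|Q|; set a := #|A|.
move=> h1 IH' QleA QM'.
have h2 : (k + 1) * M' <= (k + 1) * q by rewrite leq_mul2l QM' orbT.
nia.
Qed.
End Main.

Lemma girth_del (G : sgraph) (X : {set G}) g : girth_ge G g -> girth_ge (del_vert X) g.
Proof.
move=> gG c uc c3.
have uc' : ucycle (@adj G) (map val c).
  rewrite /ucycle cycle_map map_inj_uniq; last exact: val_inj.
  exact: uc.
by have := gG _ uc'; rewrite size_map; apply.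
Qed.

Lemma deg_sum (G : sgraph) (v : G) : deg v = \sum_(w : G) (adj v w : nat).
Proof.
rewrite /deg -sum1_card big_mkcond /=; apply: eq_bigr => w _; rewrite inE.
by case: adj.
Qed.

Lemma E_del (G : sgraph) (X : {set G}) :
  \sum_(v : G) deg v <= E (@adj (del_vert X)) setT + 2 * \sum_(v in X) deg v.
Proof.
have -> : E (@adj (del_vert X)) setT =
    \sum_(v in ~: X) \sum_(w in ~: X) (adj v w : nat).
  symmetry; rewrite big_sub; apply: eq_bigr => x _.
  by rewrite big_sub; apply: eq_bigr => y _; rewrite !inE.
have -> : \sum_(v in X) deg v = \sum_(v : G) \sum_(w : G) ((v \in X) && adj v w : nat).
  rewrite big_mkcond /=; apply: eq_bigr => v _; rewrite deg_sum.
  by case: (v \in X) => //=; rewrite big1.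
rewrite mul2n -addnn.
have e2 : \sum_(v : G) \sum_(w : G) ((v \in X) && adj v w : nat) =
          \sum_(v : G) \sum_(w : G) ((w \in X) && adj v w : nat).
  rewrite exchange_big /=; apply: eq_bigr => v _; apply: eq_bigr => w _.
  by rewrite adj_sym.
rewrite {2}e2.
have -> : \sum_(v in ~: X) \sum_(w in ~: X) (adj v w : nat) =
    \sum_(v : G) \sum_(w : G) ((v \notin X) && (w \notin X) && adj v w : nat).
  rewrite big_mkcond /=; apply: eq_bigr => v _; rewrite big_mkcond /=.
  rewrite inE; case: (v \in X) => /=; last by apply: eq_bigr => w _; rewrite inE; case: (w \in X).
  by rewrite big1.
rewrite -!big_split /=; apply: leq_sum => v _; rewrite deg_sum -!big_split /=.
apply: leq_sum => w _.
by case: (v \in X); case: (w \in X); case: adj.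
Qed.
Import Order.TTheory GRing.Theory Num.Theory.
Local Open Scope ring_scope.

Theorem proposition42 (R : realType) (delta : R) (hdelta : 0 < delta)
  (C : sgraph -> Prop)
  (hdeg : forall G, C G -> (0 < #|G|)%N /\ 2 + delta <= avg_degree R G)
  (hgirth : forall n : nat, exists G, C G /\ girth_ge G n) :
  ~ frac_tw_fragile R C.
Proof.
move=> frag.
pose eps : R := delta / (4 * (2 + delta)).
have eps0 : 0 < eps by rewrite /eps; apply: divr_gt0 => //; lra.
have [k hk] := frag eps eps0.
have k0 : 0 <= k%:R :> R by rewrite ler0n.
pose x : R := 4 * (k%:R + 1) / delta.
have x0 : 0 <= x by rewrite /x; apply: divr_ge0; lra.
pose M' := (Num.Def.archi_bound x).+1.
have hM' : 4 * (k%:R + 1) < delta * M'%:R.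
  have h1 := archi_boundP x0.
  have h2 : x < M'%:R by apply: lt_trans h1 _; rewrite ltr_nat.
  have : delta * x = 4 * (k%:R + 1) by rewrite /x; field; lra.
  move=> <-; by rewrite ltr_pM2l.
pose g := ((M' + k + 1) + (M' + k + 1 + k + 1)).+1%N.
have [G [CG gG]] := hgirth g.
have [n0 avg] := hdeg G CG.
have [p [p0 [p1 [pthin ptw]]]] := hk G CG.
pose n := #|G|.
pose D := (\sum_(v : G) deg v)%N.
pose S (X : {set G}) := (\sum_(v in X) deg v)%N.
pose c := (2 * n * (M' + k + 1))%N.
have M'pos : (0 < M')%N by [].
have hg : (M' + k + 1 + (M' + k + 1 + k + 1) < g)%N by rewrite /g.
have natb : forall X, 0 < p X -> (D * M' <= c + 2 * S X * M')%N.
  move=> X pX; have [I [te [B td]]] := ptw X pX.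
  have L := L_bound td M'pos hg (girth_del (X := X) gG) setT.
  have ED := E_del X.
  have cardH : (#|[set: del_vert X]| <= n)%N.
    rewrite cardsT /= /ind_vert card_sig; exact: max_card.
  move: L ED cardH; rewrite /c /D /S.
  set e := E _ _; set a := #|_|; set d := (\sum_(v : G) deg v)%N; set s := (\sum_(v in X) deg v)%N.
  move=> L ED cardH; nia.
have realb : forall X, p X * (D * M')%:R <= p X * (c + 2 * S X * M')%:R.
  move=> X; have := p0 X; rewrite le_eqVlt => /orP [/eqP <-|pX]; first by rewrite !mul0r.
  by rewrite ler_pM2l // ler_nat; apply: natb.
have sumb : \sum_X p X * (D * M')%:R <= \sum_X p X * (c + 2 * S X * M')%:R by apply: ler_sum => X _; apply: realb.
pose T := \sum_X p X * (S X)%:R.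
have rhs : \sum_X p X * (c + 2 * S X * M')%:R = c%:R + 2 * M'%:R * T.
  rewrite (eq_bigr (fun X => p X * c%:R + (2 * M'%:R) * (p X * (S X)%:R))); last first.
    by move=> X _; rewrite natrD !natrM; ring.
  by rewrite big_split /= -mulr_suml p1 mul1r -mulr_sumr.
rewrite rhs -mulr_suml p1 mul1r in sumb.
have Tb : T <= eps * D%:R.
  have -> : T = \sum_(v : G) (deg v)%:R * \sum_(X : {set G} | v \in X) p X.
    rewrite /T; under eq_bigr do rewrite /S natr_sum big_distrr /=.
    rewrite (exchange_big_dep xpredT) //=; apply: eq_bigr => v _.
    by rewrite big_distrr /=; apply: eq_bigr => X _; rewrite mulrC.
  rewrite /D natr_sum mulr_sumr; apply: ler_sum => v _.
  by rewrite mulrC ler_wpM2r.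
move: avg; rewrite /avg_degree -/D -/n => avg.
have nn0 : 0 < n%:R :> R by rewrite ltr0n.
rewrite ler_pdivlMr // in avg.
move: sumb; rewrite /c !natrM !natrD => sumb.
set d := D%:R in avg sumb Tb; set nn := n%:R in avg sumb nn0; set m := M'%:R in sumb hM'.
set kk := k%:R in sumb hM' k0.
have m0 : 0 <= m by rewrite /m ler0n.
have h1 : d * m <= 2%:R * nn * (m + kk + 1) + 2%:R * m * (eps * d).
  apply: le_trans sumb _; rewrite lerD2l; apply: ler_wpM2l => //; lra.
have epsE : 2 * eps * (2 * (2 + delta)) = delta by rewrite /eps; field; lra.
have h2 : d * m * (4 + delta) <= 4 * (2 + delta) * nn * (m + kk + 1).
  have h1' : d * m * (2 * (2 + delta)) <= (2%:R * nn * (m + kk + 1) + 2%:R * m * (eps * d)) * (2 * (2 + delta)).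
    by apply: ler_wpM2r => //; lra.
  have : (2%:R * nn * (m + kk + 1) + 2%:R * m * (eps * d)) * (2 * (2 + delta)) =
      4 * (2 + delta) * nn * (m + kk + 1) + delta * m * d.
    rewrite /eps; field; lra.
  move=> E1; rewrite E1 in h1'; lra.
have h3 : (2 + delta) * nn * (m * (4 + delta)) <= 4 * (2 + delta) * nn * (m + kk + 1).
  apply: le_trans h2; rewrite -[d * m * _]mulrA; apply: ler_wpM2r => //.
  by apply: mulr_ge0 => //; lra.
have pos : 0 < (2 + delta) * nn by apply: mulr_gt0 => //; lra.
have h4 : m * (4 + delta) <= 4 * (m + kk + 1).
  rewrite -(ler_pM2l pos).
  have -> : (2 + delta) * nn * (4 * (m + kk + 1)) = 4 * (2 + delta) * nn * (m + kk + 1) by ring.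
  exact: h3.
lra.
Qed.
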